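(* Let $K\ge 1$ and ${\bf p},{\bf q}\in[0,1]^K$ with $q_k\le p_k$ for all $k$, and let $\Lambda=\{\boldsymbol\lambda\in[0,1]^K: q_k\le\lambda_k\le p_k,\ k=1,\dots,K\}$. Let $\mathcal{V}\subseteq\mathcal{S}_K$ be a closed set (with respect to the Euclidean distance on $\mathbb{R}^K$), and let ${\bf u}\in\mathcal{S}_K$. Then ${\bf u}$ incurs sure loss on $\Lambda$ relative to $\mathcal{V}$ if and only if $({\bf u},{\bf v})$ induces Simpson's paradox in $({\bf p},{\bf q})$ for all ${\bf v}\in\mathcal{V}$.
   Context: $\mathcal{S}_K=\{(v_1,\dots,v_K): \sum_{k=1}^K v_k=1,\ v_k\ge0\}$ is the standard simplex; elements of $\mathcal{S}_K$ are called aggregation rules and $\mathcal{V}$ is the set of desirable aggregation rules. Let $\mathcal{P}_{\mathcal{V}}=\{\boldsymbol\lambda^\top{\bf v}:\boldsymbol\lambda\in\Lambda,\ {\bf v}\in\mathcal{V}\}$. ''${\bf u}$ incurs sure loss on $\Lambda$ relative to $\mathcal{V}$'' means: $\sup_{\boldsymbol\lambda\in\Lambda}\boldsymbol\lambda^\top{\bf u}<\inf\mathcal{P}_{\mathcal{V}}$ or $\inf_{\boldsymbol\lambda\in\Lambda}\boldsymbol\lambda^\top{\bf u}>\sup\mathcal{P}_{\mathcal{V}}$. ''$({\bf u},{\bf v})$ induces Simpson's paradox in $({\bf p},{\bf q})$ for all ${\bf v}\in\mathcal{V}$'' means: ${\bf p}^\top{\bf u}<\inf_{{\bf v}\in\mathcal{V}}{\bf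 q}^\top{\bf v}$ or ${\bf q}^\top{\bf u}>\sup_{{\bf v}\in\mathcal{V}}{\bf p}^\top{\bf v}$. *)

(* Defs.v *)
From HB Require Import structures.
From mathcomp Require Import all_boot all_order all_algebra.
From mathcomp Require Import all_classical all_reals all_analysis.
Set Implicit Arguments. Unset Strict Implicit. Unset Printing Implicit Defensive.
Import Order.TTheory GRing.Theory Num.Theory.
Import numFieldNormedType.Exports.
Local Open Scope classical_set_scope.
Local Open Scope ring_scope.

(* Vectors of R^K are row vectors 'rV[R]_K; coordinate k of x is x 0 k. *)
Definition dotp {R : realType} {K : nat} (x y : 'rV[R]_K) : R :=
  \sum_(k < K) x 0 k * y 0 k.

Definition simplex (R : realType) (K : nat) : set 'rV[R]_K :=
  [set v | (forall k, 0 <= v 0 k) /\ \sum_(k < K) v 0 k = 1].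

Definition PV {R : realType} {K : nat} (Lam V : set 'rV[R]_K) : set R :=
  [set dotp l v | l in Lam & v in V].

Definition sure_loss {R : realType} {K : nat} (Lam V : set 'rV[R]_K)
    (u : 'rV[R]_K) : Prop :=
  (ereal_sup [set (dotp l u)%:E | l in Lam] <
     ereal_inf [set x%:E | x in PV Lam V])%E \/
  (ereal_inf [set (dotp l u)%:E | l in Lam] >
     ereal_sup [set x%:E | x in PV Lam V])%E.

Definition simpson_all {R : realType} {K : nat} (p q u : 'rV[R]_K)
    (V : set 'rV[R]_K) : Prop :=
  ((dotp p u)%:E < ereal_inf [set (dotp q v)%:E | v in V])%E \/
  ((dotp q u)%:E > ereal_sup [set (dotp p v)%:E | v in V])%E.
Arguments simplex : clear implicits.

(* Main.v *)
Require Import Defs.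
From HB Require Import structures.
From mathcomp Require Import all_boot all_order all_algebra.
From mathcomp Require Import all_classical all_reals all_analysis.
Import Order.TTheory GRing.Theory Num.Theory.
Import numFieldNormedType.Exports.
Local Open Scope classical_set_scope.
Local Open Scope ring_scope.

Lemma dotp_mono (R : realType) (K : nat) (a b v : 'rV[R]_K) :
  (forall k, a 0 k <= b 0 k) -> (forall k, 0 <= v 0 k) -> dotp a v <= dotp b v.
Proof.
move=> hab hv; rewrite /dotp; apply: ler_sum => k _.
by apply: ler_wpM2r.
Qed.

Lemma sup_eq (R : realType) (S : set \bar R) x :
  S x -> ubound S x -> ereal_sup S = x.
Proof.
move=> Sx ub; apply/le_anti/andP; split; first exact: ge_ereal_sup.
exact: ereal_sup_ubound.
Qed.

Lemma inf_eq (R : realType) (S : set \bar R) x :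
  S x -> lbound S x -> ereal_inf S = x.
Proof.
move=> Sx lb; apply/le_anti/andP; split; first exact: ereal_inf_lbound.
exact: le_ereal_inf_tmp.
Qed.

Theorem theorem4p1 (R : realType) (K : nat) (hK : (1 <= K)%N)
    (p q : 'rV[R]_K)
    (hp : forall k, 0 <= p 0 k <= 1) (hq : forall k, 0 <= q 0 k <= 1)
    (hqp : forall k, q 0 k <= p 0 k)
    (Lam : set 'rV[R]_K)
    (hLam : Lam = [set l : 'rV[R]_K | forall k,
                     0 <= l 0 k <= 1 /\ q 0 k <= l 0 k <= p 0 k])
    (V : set 'rV[R]_K) (hVS : V `<=` simplex R K) (hVc : closed V)
    (u : 'rV[R]_K) (hu : simplex R K u) :
  sure_loss Lam V u <-> simpson_all p q u V.
Proof.
have pL : Lam p by rewrite hLam => k; rewrite lexx hqp hp.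
have qL : Lam q by rewrite hLam => k; rewrite lexx hqp hq.
have Lq : forall l, Lam l -> forall k, q 0 k <= l 0 k.
  by rewrite hLam => l hl k; case: (hl k) => _ /andP[].
have Lp : forall l, Lam l -> forall k, l 0 k <= p 0 k.
  by rewrite hLam => l hl k; case: (hl k) => _ /andP[].
have Vn : forall v, V v -> forall k, 0 <= v 0 k.
  by move=> v /hVS [].
have un : forall k, 0 <= u 0 k by case: hu.
have E1 : ereal_sup [set (dotp l u)%:E | l in Lam] = (dotp p u)%:E.
  apply: sup_eq; first by exists p.
  move=> _ [l hl <-]; rewrite lee_fin; apply: dotp_mono => //; exact: Lp.
have E2 : ereal_inf [set (dotp l u)%:E | l in Lam] = (dotp q u)%:E.
  apply: inf_eq; first by exists q.
  move=> _ [l hl <-]; rewrite lee_fin; apply: dotp_mono => //; exact: Lq.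
have E3 : ereal_inf [set x%:E | x in PV Lam V] =
          ereal_inf [set (dotp q v)%:E | v in V].
  apply/le_anti/andP; split.
    apply: le_ereal_inf => _ [v hv <-]; exists (dotp q v) => //.
    by exists q => //; exists v.
  apply: le_ereal_inf_tmp => _ [_ [l hl [v hv <-]] <-].
  apply: le_trans (_ : (dotp q v)%:E <= _)%E.
    by apply: ereal_inf_lbound; exists v.
  rewrite lee_fin; apply: dotp_mono; [exact: Lq | exact: Vn].
have E4 : ereal_sup [set x%:E | x in PV Lam V] =
          ereal_sup [set (dotp p v)%:E | v in V].
  apply/le_anti/andP; split; last first.
    apply: ereal_sup_le => _ [v hv <-]; exists (dotp p v) => //.
    by exists p => //; exists v.
  apply: ge_ereal_sup => _ [_ [l hl [v hv <-]] <-].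
  apply: le_trans (_ : (dotp p v)%:E <= _)%E; last first.
    by apply: ereal_sup_ubound; exists v.
  rewrite lee_fin; apply: dotp_mono; [exact: Lp | exact: Vn].
by rewrite /sure_loss /simpson_all E1 E2 E3 E4.
Qed.
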